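(* Consider a neutral evolutionary model on $N$ sites given by a replacement rule $p$ satisfying the fixation assumption described in the context, with replacement probabilities $e_{ij}$, birth rates $b_i$, death rates $d_i$, total birth rate $B>0$, site-specific fixation probabilities $\rho_i$, overall fixation probability $\rho=\frac{1}{B}\sum_{i=1}^N d_i\rho_i$ and molecular clock rate $K=Nu\rho$ (for a mutation probability $u>0$ per reproduction). Then $\rho_i=1/N$ for all $i=1,\ldots,N$ if and only if $b_i=d_i$ for all $i=1,\ldots,N$. In particular, if $b_i=d_i$ for all $i$, then $\rho=1/N$ and consequently $K=u$.
   Context: There are $N$ sites $1,\ldots,N$, each always occupied by one individual of type M (mutant) or R (resident); a state is $\mathbf{s}\in\{\mathrm{M},\mathrm{R}\}^N$. A replacement event is a pair $(R,\alpha)$ with $R\subseteq\{1,\ldots,N\}$ and $\alpha:R\to\{1,\ldots,N\}$. A replacement rule is a probability distribution $p(R,\alpha)$ on replacement events, independent of the state. The evolutionary Markov chain: at each time-step an event $(R,\alpha)$ is drawn with probability $p(R,\alpha)$ and the new state is $s_i'=s_i$ if $i\notin R$, $s_i'=s_{\alpha(i)}$ if $i\in R$. Fixation assumption: there exist a site $i$ and a finite sequence of replacement events, each of positive probability, such that if these events occur consecutively (from any initial state) every site ends up carrying the type initially at site $i$. Define $e_{ij}=\sum_{(R,\alpha):\, j\in R,\ \alpha(j)=i}p(R,\alpha)$, $b_i=\sum_j e_{ij}$, $d_i=\sum_j e_{ji}$, $B=\sum_{i,j}e_{ij}$. The site-specific fixation probability $\rho_i$ is the probability that the chain started from the state with M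 at site $i$ and R elsewhere is eventually absorbed in $(\mathrm{M},\ldots,\mathrm{M})$. *)

(* Defs.v *)
From HB Require Import structures.
From mathcomp Require Import all_boot all_order all_algebra.
From mathcomp Require Import all_classical all_reals all_analysis.
Set Implicit Arguments. Unset Strict Implicit. Unset Printing Implicit Defensive.
Import Order.TTheory GRing.Theory Num.Theory.
Import numFieldNormedType.Exports.
Local Open Scope ring_scope.

(* A state: true = M (mutant), false = R (resident). *)
Definition state (N : nat) : finType := {ffun 'I_N -> bool}.

(* A replacement event (R, alpha).  alpha : R -> sites is represented by a total
   function on sites; only its values on R are ever used. *)
Definition event (N : nat) : finType := ({set 'I_N} * {ffun 'I_N -> 'I_N})%type.

Definition apply_event (N : nat) (ev : event N) (s : state N) : state N :=
  [ffun j => if j \in ev.1 then s (ev.2 j) else s j].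

Definition apply_events (N : nat) (es : seq (event N)) (s : state N) : state N :=
  foldl (fun s ev => apply_event ev s) s es.

Definition is_replacement_rule (R : realType) (N : nat) (p : event N -> R) : Prop :=
  (forall ev, 0 <= p ev) /\ \sum_(ev : event N) p ev = 1.

Definition fixation_assumption (R : realType) (N : nat) (p : event N -> R) : Prop :=
  exists (i : 'I_N) (es : seq (event N)),
    (forall ev, ev \in es -> 0 < p ev) /\
    (forall s : state N, apply_events es s = [ffun _ => s i]).

(* e_ij : probability that the offspring of i replaces j. *)
Definition e_rate (R : realType) (N : nat) (p : event N -> R) (i j : 'I_N) : R :=
  \sum_(ev : event N | (j \in ev.1) && (ev.2 j == i)) p ev.

Definition birth_rate (R : realType) (N : nat) (p : event N -> R) (i : 'I_N) : R :=
  \sum_(j < N) e_rate p i j.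

Definition death_rate (R : realType) (N : nat) (p : event N -> R) (i : 'I_N) : R :=
  \sum_(j < N) e_rate p j i.

Definition total_birth (R : realType) (N : nat) (p : event N -> R) : R :=
  \sum_(i < N) \sum_(j < N) e_rate p i j.

Definition trans (R : realType) (N : nat) (p : event N -> R) (s s' : state N) : R :=
  \sum_(ev : event N | apply_event ev s == s') p ev.

Fixpoint trans_n (R : realType) (N : nat) (p : event N -> R) (t : nat)
    (s s' : state N) : R :=
  match t with
  | 0 => (s == s')%:R
  | t'.+1 => \sum_(s'' : state N) trans_n p t' s s'' * trans p s'' s'
  end.

Definition allM (N : nat) : state N := [ffun _ => true].
Definition single_mutant (N : nat) (i : 'I_N) : state N := [ffun j => j == i].

(* Probability of eventual absorption in allM starting from s: since allM is
   absorbing, this is the (monotone) limit of P(X_t = allM). *)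
Definition absorb_prob (R : realType) (N : nat) (p : event N -> R) (s : state N) : R :=
  limn (fun t => trans_n p t s (allM N)).

Definition rho_site (R : realType) (N : nat) (p : event N -> R) (i : 'I_N) : R :=
  absorb_prob p (single_mutant i).

Definition rho_overall (R : realType) (N : nat) (p : event N -> R) : R :=
  (total_birth p)^-1 * \sum_(i < N) death_rate p i * rho_site p i.

Definition clock_rate (R : realType) (N : nat) (p : event N -> R) (u : R) : R :=
  N%:R * u * rho_overall p.

(* Main.v *)
Require Import Defs.
From HB Require Import structures.
From mathcomp Require Import all_boot all_order all_algebra.
From mathcomp Require Import all_classical all_reals all_analysis.
From mathcomp Require Import ring lra.
Import Order.TTheory GRing.Theory Num.Theory.
Import numFieldNormedType.Exports.
Local Open Scope classical_set_scope.
Local Open Scope ring_scope.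
Set Implicit Arguments. Unset Strict Implicit.

Lemma trans_ge0 (R : realType) N (p : event N -> R) :
  (forall ev, 0 <= p ev) -> forall s s', 0 <= trans p s s'.
Proof. by move=> hp s s'; apply: sumr_ge0 => ev _; exact: hp. Qed.

Lemma trans_n_ge0 (R : realType) N (p : event N -> R) :
  (forall ev, 0 <= p ev) -> forall t s s', 0 <= trans_n p t s s'.
Proof.
move=> hp; elim=> [|t IH] s s' /=; first by rewrite ler0n.
by apply: sumr_ge0 => r _; apply: mulr_ge0 => //; exact: trans_ge0.
Qed.

Lemma trans_sum (R : realType) N (p : event N -> R) s (f : state N -> R) :
  \sum_(s' : state N) trans p s s' * f s' = \sum_(ev : event N) p ev * f (apply_event ev s).
Proof.
rewrite [RHS](partition_big (fun ev => apply_event ev s) xpredT) //=.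
apply: eq_bigr => s' _; rewrite /trans mulr_suml; apply: eq_bigr => ev /eqP -> //.
Qed.

Lemma trans_n_sum1 (R : realType) N (p : event N -> R) :
  is_replacement_rule p -> forall t s, \sum_(s' : state N) trans_n p t s s' = 1.
Proof.
move=> [hp h1]; elim=> [|t IH] s /=.
  rewrite (bigD1 s) //= eqxx big1 ?addr0 // => s' /negbTE; by rewrite eq_sym => ->.
rewrite exchange_big /= -[RHS](IH s); apply: eq_bigr => r _.
rewrite -mulr_sumr.
have -> : \sum_(s' : state N) trans p r s' = 1.
  have := trans_sum p r (fun _ => 1).
  under eq_bigr do rewrite mulr1.
  by move=> ->; under eq_bigr do rewrite mulr1.
by rewrite mulr1.
Qed.

Lemma trans_n_CK (R : realType) N (p : event N -> R) t m s s' :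
  trans_n p (t + m) s s' = \sum_(r : state N) trans_n p t s r * trans_n p m r s'.
Proof.
elim: m s' => [|m IH] s' /=.
  rewrite addn0 (bigD1 s') //= eqxx mulr1 big1 ?addr0 // => r /negbTE.
  by rewrite eq_sym => ->; rewrite mulr0.
rewrite addnS /=; under eq_bigr do rewrite IH mulr_suml.
rewrite exchange_big /=; apply: eq_bigr => r _; rewrite mulr_sumr.
by apply: eq_bigr => q _; rewrite mulrA.
Qed.

Lemma trans_n1 (R : realType) N (p : event N -> R) s s' : trans_n p 1 s s' = trans p s s'.
Proof.
rewrite /= (bigD1 s) //= eqxx mul1r big1 ?addr0 // => r /negbTE.
by rewrite eq_sym => ->; rewrite mul0r.
Qed.

Lemma trans_n_back (R : realType) N (p : event N -> R) t s s' :
  trans_n p t.+1 s s' = \sum_(r : state N) trans p s r * trans_n p t r s'.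
Proof. by rewrite -add1n trans_n_CK; apply: eq_bigr => r _; rewrite trans_n1. Qed.

Definition cstS N (b : bool) : state N := [ffun _ => b].
Definition isconst N (r : state N) := (r == cstS N true) || (r == cstS N false).
Definition nc (R : realType) N (p : event N -> R) t s :=
  \sum_(s' : state N | ~~ isconst s') trans_n p t s s'.

Lemma apply_cst N (ev : event N) b : apply_event ev (cstS N b) = cstS N b.
Proof. by apply/ffunP => j; rewrite !ffunE; case: ifP. Qed.

Lemma trans_cst (R : realType) N (p : event N -> R) :
  is_replacement_rule p -> forall b s', trans p (cstS N b) s' = (cstS N b == s')%:R.
Proof.
move=> [hp h1] b s'; rewrite /trans; under eq_bigl do rewrite apply_cst.
by case: eqP => _; [rewrite h1 | rewrite big_pred0_eq].
Qed.

Lemma trans_n_cst (R : realType) N (p : event N -> R) :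
  is_replacement_rule p -> forall t b s', trans_n p t (cstS N b) s' = (cstS N b == s')%:R.
Proof.
move=> hp; elim=> [|t IH] b s' //.
rewrite trans_n_back (bigD1 (cstS N b)) //= trans_cst // eqxx mul1r IH big1 ?addr0 //.
by move=> r /negbTE; rewrite trans_cst // eq_sym => ->; rewrite mul0r.
Qed.

Lemma nc_cst (R : realType) N (p : event N -> R) :
  is_replacement_rule p -> forall m b, nc p m (cstS N b) = 0.
Proof.
move=> hp m b; apply: big1 => s' hs'; rewrite trans_n_cst //.
case: eqP hs' => // <-; rewrite /isconst; by case: b; rewrite eqxx ?orbT.
Qed.

Lemma nc_ge0 (R : realType) N (p : event N -> R) :
  is_replacement_rule p -> forall t s, 0 <= nc p t s.
Proof. by move=> [hp _] t s; apply: sumr_ge0 => s' _; exact: trans_n_ge0. Qed.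

Lemma nc_le1 (R : realType) N (p : event N -> R) :
  is_replacement_rule p -> forall t s, nc p t s <= 1.
Proof.
move=> hp t s; rewrite -(trans_n_sum1 hp t s) [X in _ <= X](bigID (fun s' => ~~ isconst s')) /=.
by rewrite lerDl; apply: sumr_ge0 => s' _; apply: trans_n_ge0; case: hp.
Qed.

Lemma nc_step (R : realType) N (p : event N -> R) :
  is_replacement_rule p -> forall t m c s,
  (forall r, ~~ isconst r -> nc p m r <= c) -> nc p (t + m) s <= c * nc p t s.
Proof.
move=> hp t m c s hc.
have -> : nc p (t + m) s = \sum_(r : state N) trans_n p t s r * nc p m r.
  rewrite /nc; under eq_bigr do rewrite trans_n_CK.
  rewrite exchange_big /=; apply: eq_bigr => r _; by rewrite mulr_sumr.
rewrite (bigID (fun r => isconst r)) /= big1 ?add0r; last first.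
  move=> r /orP[] /eqP ->; by rewrite nc_cst // mulr0.
rewrite /nc mulr_sumr; apply: ler_sum => r hr.
rewrite mulrC; apply: ler_wpM2r; first by apply: trans_n_ge0; case: hp.
exact: hc.
Qed.

Lemma trans_ge_p (R : realType) N (p : event N -> R) :
  (forall ev, 0 <= p ev) -> forall ev s, p ev <= trans p s (apply_event ev s).
Proof.
move=> hp ev s; rewrite /trans (bigD1 ev) //= lerDl.
by apply: sumr_ge0 => e _; exact: hp.
Qed.

Lemma path_bound (R : realType) N (p : event N -> R) :
  (forall ev, 0 <= p ev) -> forall es r, (forall ev, ev \in es -> 0 < p ev) ->
  \prod_(ev <- es) p ev <= trans_n p (size es) r (apply_events es r).
Proof.
move=> hp; elim=> [|ev es IH] r hes; first by rewrite big_nil /= eqxx.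
have -> : size (ev :: es) = (size es).+1 by [].
have -> : apply_events (ev :: es) r = apply_events es (apply_event ev r) by [].
rewrite big_cons trans_n_back (bigD1 (apply_event ev r)) //=.
rewrite -[X in X <= _]addr0; apply: lerD; last first.
  by apply: sumr_ge0 => q _; apply: mulr_ge0; [exact: trans_ge0 | exact: trans_n_ge0].
apply: ler_pM => //; first by apply: prodr_ge0 => e _; exact: hp.
  exact: trans_ge_p.
by apply: IH => e he; apply: hes; rewrite inE he orbT.
Qed.

Lemma nc_L (R : realType) N (p : event N -> R) (i : 'I_N) (es : seq (event N)) :
  is_replacement_rule p -> (forall ev, ev \in es -> 0 < p ev) ->
  (forall s : state N, apply_events es s = [ffun _ => s i]) ->
  forall r, nc p (size es) r <= 1 - \prod_(ev <- es) p ev.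
Proof.
move=> hp hpos hfix r; set q := apply_events es r.
have hq : isconst q by rewrite /q hfix /isconst; case: (r i); rewrite eqxx ?orbT.
have h1 := trans_n_sum1 hp (size es) r; rewrite (bigD1 q) //= in h1.
have -> : 1 - \prod_(ev <- es) p ev =
   \sum_(s' | s' != q) trans_n p (size es) r s' + (trans_n p (size es) r q - \prod_(ev <- es) p ev).
  by rewrite -h1; ring.
rewrite -[X in X <= _]addr0; apply: lerD; last first.
  by rewrite subr_ge0; apply: path_bound => //; case: hp.
rewrite /nc [X in X <= _]big_mkcond [X in _ <= X]big_mkcond /=; apply: ler_sum => s' _.
have [E|ne] := eqVneq s' q; first by rewrite E hq /= ?eqxx.
by case: ifP => // _; apply: trans_n_ge0; case: hp.
Qed.

Lemma nc_cvg0 (R : realType) N (p : event N -> R) :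
  is_replacement_rule p -> fixation_assumption p ->
  forall s, (fun t => nc p t s) @ \oo --> (0:R).
Proof.
move=> hp [i [es [hpos hfix]]] s.
set M := size es; set d := \prod_(ev <- es) p ev.
have dpos : 0 < d by rewrite /d big_seq; apply: prodr_gt0 => ev hev; exact: hpos.
have hstep t : nc p (t + M) s <= (1 - d) * nc p t s.
  by apply: nc_step => // r _; apply: nc_L.
have hmono : nonincreasing_seq (fun t => nc p t s).
  apply/nonincreasing_seqP => n; rewrite -addn1.
  by apply: (le_trans (nc_step hp n s (c:=1) _)); [move=> r _; exact: nc_le1 | rewrite mul1r].
have hlb : has_lbound (range (fun t => nc p t s)).
  by exists 0 => _ [n _ <-]; exact: nc_ge0.
have hc := nonincreasing_cvgn hmono hlb.
set l := inf _ in hc.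
have l0 : 0 <= l.
  apply: (ler_cvg_to (cvg_cst 0) hc); apply: nearW => n; exact: nc_ge0.
have hc2 : nc p (t + M) s @[t --> \oo] --> l by rewrite (cvg_shiftn M (fun t => nc p t s)).
have hc3 : (1 - d) * nc p t s @[t --> \oo] --> (1 - d) * l by apply: cvgMl_tmp.
have H : l <= (1 - d) * l by apply: (ler_cvg_to hc2 hc3); apply: nearW => n; exact: hstep.
have l00 : l = 0 by nra.
by rewrite -l00.
Qed.

Definition vexp (R : realType) N (p : event N -> R) t (s : state N) (j : 'I_N) :=
  \sum_(s' : state N) trans_n p t s s' * (s' j)%:R.

Lemma trans_n_le1 (R : realType) N (p : event N -> R) :
  is_replacement_rule p -> forall t s s', trans_n p t s s' <= 1.
Proof.
move=> hp t s s'; rewrite -(trans_n_sum1 hp t s) (bigD1 s') //= lerDl.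
by apply: sumr_ge0 => r _; apply: trans_n_ge0; case: hp.
Qed.

Lemma aM_cvg (R : realType) N (p : event N -> R) :
  is_replacement_rule p ->
  forall s, (fun t => trans_n p t s (allM N)) @ \oo --> absorb_prob p s.
Proof.
move=> hp s; apply: nondecreasing_is_cvgn.
  apply/nondecreasing_seqP => t /=; rewrite (bigD1 (allM N)) //=.
  have -> : allM N = cstS N true by [].
  rewrite trans_cst // eqxx mulr1 lerDl.
  by apply: sumr_ge0 => r _; apply: mulr_ge0; [apply: trans_n_ge0|apply: trans_ge0]; case: hp.
by exists 1 => _ [n _ <-]; exact: trans_n_le1.
Qed.

Lemma v_bounds (R : realType) N (p : event N -> R) :
  is_replacement_rule p -> forall t s j,
  trans_n p t s (allM N) <= vexp p t s j <= trans_n p t s (allM N) + nc p t s.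
Proof.
move=> hp t s j; have hge := trans_n_ge0 (proj1 hp).
apply/andP; split.
  rewrite /vexp (bigD1 (allM N)) //= ffunE mulr1 lerDl.
  by apply: sumr_ge0 => r _; apply: mulr_ge0.
have -> : trans_n p t s (allM N) + nc p t s =
  \sum_(s' : state N) trans_n p t s s' * ((s' == allM N)%:R + (~~ isconst s')%:R).
  rewrite [RHS](eq_bigr _ (fun s' _ => mulrDr _ _ _)) big_split /=; congr (_ + _).
    rewrite (bigD1 (allM N)) //= eqxx mulr1 big1 ?addr0 // => r /negbTE ->.
    by rewrite mulr0.
  by rewrite /nc big_mkcond; apply: eq_bigr => r _; case: ifP; rewrite ?mulr1 ?mulr0.
rewrite /vexp; apply: ler_sum => s' _; apply: ler_wpM2l => //.
have [->|nM] := eqVneq s' (allM N); first by rewrite ffunE /= lerDl.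
have [->|nR] := eqVneq s' (cstS N false); first by rewrite ffunE /=; apply: addr_ge0.
rewrite /isconst (negbTE nR) /= add0r.
have -> : (s' == cstS N true) = false by apply/negbTE.
by rewrite /= lern1 leq_b1.
Qed.

Lemma v_cvg (R : realType) N (p : event N -> R) :
  is_replacement_rule p -> fixation_assumption p ->
  forall s j, (fun t => vexp p t s j) @ \oo --> absorb_prob p s.
Proof.
move=> hp hf s j.
apply: (@squeeze_cvgr _ _ _ _ (fun t => trans_n p t s (allM N))
          (fun t => trans_n p t s (allM N) + nc p t s)).
- by apply: nearW => t; exact: v_bounds.
- exact: aM_cvg.
- rewrite -[X in _ --> X]addr0; apply: cvgD; [exact: aM_cvg | exact: nc_cvg0].
Qed.

Lemma cvg_sumI (R : realType) (I : finType) (f : I -> nat -> R) (a : I -> R) :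
  (forall i, f i @ \oo --> a i) -> (fun t => \sum_i f i t) @ \oo --> \sum_i a i.
Proof. by move=> h; apply: cvg_big => // -[x y]; apply: add_continuous. Qed.

Definition Wop (R : realType) N (p : event N -> R) (x : 'I_N -> R) (j : 'I_N) :=
  \sum_(ev : event N) p ev * (if j \in ev.1 then x (ev.2 j) else x j).

Lemma v_step (R : realType) N (p : event N -> R) t s j :
  vexp p t.+1 s j = Wop p (fun k => vexp p t s k) j.
Proof.
rewrite /Wop /vexp /=.
transitivity (\sum_(r : state N) \sum_(ev : event N)
     trans_n p t s r * (p ev * ((apply_event ev r) j)%:R)).
  under eq_bigr do rewrite mulr_suml.
  rewrite exchange_big /=; apply: eq_bigr => r _.
  rewrite -[RHS]mulr_sumr -(trans_sum p r (fun s' => (s' j)%:R)) mulr_sumr.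
  by apply: eq_bigr => s' _; rewrite mulrA.
rewrite exchange_big /=; apply: eq_bigr => ev _.
under eq_bigr do rewrite ffunE.
by case: ifP => _; rewrite mulr_sumr; apply: eq_bigr => r _; rewrite mulrCA.
Qed.

Lemma Wop_lin (R : realType) N (p : event N -> R) (c : 'I_N -> R) (y : 'I_N -> 'I_N -> R) j :
  Wop p (fun k => \sum_i c i * y i k) j = \sum_i c i * Wop p (y i) j.
Proof.
rewrite /Wop.
transitivity (\sum_(ev : event N) \sum_i c i *
   (p ev * (if j \in ev.1 then y i (ev.2 j) else y i j))).
  apply: eq_bigr => ev _; case: ifP => _; rewrite mulr_sumr; apply: eq_bigr => i _; by rewrite mulrCA.
by rewrite exchange_big; apply: eq_bigr => i _; rewrite mulr_sumr.
Qed.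

Lemma v0 (R : realType) N (p : event N -> R) s j : vexp p 0 s j = (s j)%:R.
Proof.
rewrite /vexp /= (bigD1 s) //= eqxx mul1r big1 ?addr0 // => r /negbTE.
by rewrite eq_sym => ->; rewrite mul0r.
Qed.

Lemma v_lin (R : realType) N (p : event N -> R) t s j :
  vexp p t s j = \sum_i (s i)%:R * vexp p t (single_mutant i) j.
Proof.
elim: t j => [|t IH] j.
  rewrite v0; under eq_bigr do rewrite v0 ffunE.
  rewrite (bigD1 j) //= eqxx mulr1 big1 ?addr0 // => i /negbTE.
  by rewrite eq_sym => ->; rewrite mulr0.
rewrite v_step; under eq_bigr do rewrite v_step.
rewrite -Wop_lin; congr Wop; apply: funext => k; exact: IH.
Qed.

Lemma sum_in_R (R : realType) N (p : event N -> R) j (x : 'I_N -> R) :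
  \sum_(ev : event N | j \in ev.1) p ev * x (ev.2 j) = \sum_i e_rate p i j * x i.
Proof.
rewrite (partition_big (fun ev : event N => ev.2 j) xpredT) //=.
apply: eq_bigr => i _; rewrite /e_rate mulr_suml; apply: eq_bigr => ev /andP[_ /eqP ->] //.
Qed.

Lemma Wop_rates (R : realType) N (p : event N -> R) :
  is_replacement_rule p -> forall x j,
  Wop p x j = x j - death_rate p j * x j + \sum_i e_rate p i j * x i.
Proof.
move=> [hp h1] x j.
have hd : \sum_(ev : event N | j \in ev.1) p ev = death_rate p j.
  have := sum_in_R p j (fun _ => 1); under eq_bigr do rewrite mulr1.
  by move=> ->; rewrite /death_rate; apply: eq_bigr => i _; rewrite mulr1.
have hnd : \sum_(ev : event N | j \notin ev.1) p ev = 1 - death_rate p j.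
  by rewrite -h1 (bigID (fun ev : event N => j \in ev.1) xpredT) /= hd; ring.
rewrite /Wop (bigID (fun ev : event N => j \in ev.1)) /=.
rewrite (eq_bigr (fun ev => p ev * x (ev.2 j))); last by move=> ev ->.
rewrite [X in _ + X](eq_bigr (fun ev => p ev * x j)); last by move=> ev /negbTE ->.
by rewrite sum_in_R -mulr_suml hnd; ring.
Qed.

Lemma sum_Wop (R : realType) N (p : event N -> R) :
  is_replacement_rule p -> forall x,
  \sum_j Wop p x j = \sum_j x j - \sum_j death_rate p j * x j + \sum_j birth_rate p j * x j.
Proof.
move=> hp x; under eq_bigr do rewrite Wop_rates //.
rewrite !big_split /= sumrN; congr (_ + _).
rewrite exchange_big /=; apply: eq_bigr => i _; by rewrite /birth_rate mulr_suml.
Qed.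

Lemma cvg_uniq (R : realType) (f : nat -> R) (a b : R) : f @ \oo --> a -> f @ \oo --> b -> a = b.
Proof.
move=> ha hb; apply/le_anti/andP; split; [apply: (ler_cvg_to ha hb) | apply: (ler_cvg_to hb ha)]; by apply: nearW.
Qed.

Lemma sum_single (R : realType) N (k : 'I_N) (F : 'I_N -> R) :
  \sum_i ((single_mutant k) i)%:R * F i = F k.
Proof.
rewrite (bigD1 k) //= ffunE eqxx mul1r big1 ?addr0 // => i /negbTE ne.
by rewrite ffunE ne mul0r.
Qed.

Lemma partA (R : realType) N (p : event N -> R) :
  is_replacement_rule p -> fixation_assumption p ->
  (forall i, birth_rate p i = death_rate p i) -> forall i, rho_site p i = N%:R^-1.
Proof.
move=> hp hf hbd i.
have N0 : N%:R != 0 :> R by rewrite pnatr_eq0 -lt0n; apply: (leq_ltn_trans _ (ltn_ord i)).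
set s := single_mutant i.
have hS t : \sum_j vexp p t s j = 1.
  elim: t => [|t IH].
    under eq_bigr do rewrite v0.
    by rewrite -[RHS](sum_single i (fun _ => 1:R)); apply: eq_bigr => j _; rewrite mulr1.
  under eq_bigr do rewrite v_step.
  rewrite sum_Wop // -IH [X in _ + X](eq_bigr (fun j => death_rate p j * vexp p t s j)); last by move=> j _; rewrite hbd.
  by rewrite subrK.
have hc := cvg_sumI (fun j => @v_cvg R N p hp hf s j).
have : \sum_(j < N) absorb_prob p s = 1.
  apply: (cvg_uniq hc); under eq_fun do rewrite hS; exact: cvg_cst.
rewrite sumr_const card_ord /rho_site -/s => H.
have H2 : N%:R * absorb_prob p s = 1 by rewrite mulr_natl.
by rewrite -[LHS](mulKf N0) H2 mulr1.
Qed.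

Lemma partB (R : realType) N (p : event N -> R) :
  is_replacement_rule p -> fixation_assumption p ->
  (forall i, rho_site p i = N%:R^-1) -> forall k, birth_rate p k = death_rate p k.
Proof.
move=> hp hf hrho k.
have N0 : N%:R != 0 :> R by rewrite pnatr_eq0 -lt0n; apply: (leq_ltn_trans _ (ltn_ord k)).
set s := single_mutant k.
have hback0 t : vexp p t.+1 s k = \sum_(r : state N) trans p s r * vexp p t r k.
  rewrite /vexp; under eq_bigr do rewrite trans_n_back mulr_suml.
  rewrite exchange_big /=; apply: eq_bigr => r _; rewrite mulr_sumr.
  by apply: eq_bigr => s' _; rewrite mulrA.
have hL : (fun t => vexp p t.+1 s k) @ \oo --> (N%:R^-1 : R).
  rewrite -(hrho k) /rho_site -/s.
  by rewrite (cvg_shiftS (fun t => vexp p t s k)); apply: v_cvg.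
have hR : (fun t => vexp p t.+1 s k) @ \oo -->
    \sum_(r : state N) trans p s r * \sum_i (r i)%:R * N%:R^-1.
  under eq_fun do rewrite hback0.
  apply: cvg_sumI => r; apply: cvgMl_tmp.
  under eq_fun do rewrite v_lin.
  apply: cvg_sumI => i; apply: cvgMl_tmp; rewrite -(hrho i); exact: v_cvg.
have E := cvg_uniq hL hR.
have E2 : \sum_(r : state N) trans p s r * \sum_i (r i)%:R * N%:R^-1 =
    (\sum_i Wop p (fun i => (s i)%:R) i) * N%:R^-1.
  under eq_bigr do rewrite -mulr_suml mulrA.
  rewrite -mulr_suml; congr (_ * _).
  rewrite (trans_sum p s (fun r => \sum_i (r i)%:R)) /Wop exchange_big /=.
  apply: eq_bigr => ev _; rewrite mulr_sumr; apply: eq_bigr => i _.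
  by rewrite ffunE; case: ifP.
rewrite E2 sum_Wop // in E.
have E3 : \sum_i ((s i)%:R : R) = 1.
  by rewrite -[RHS](sum_single k (fun _ => 1:R)); apply: eq_bigr => j _; rewrite mulr1.
have sr (F : 'I_N -> R) : \sum_j F j * (s j)%:R = F k.
  by rewrite -[RHS](sum_single k F); apply: eq_bigr => j _; rewrite mulrC.
rewrite E3 !sr in E.
have Ninv0 : N%:R^-1 != 0 :> R by rewrite invr_eq0.
have E4 : (1 - death_rate p k + birth_rate p k) * N%:R^-1 = 1 * N%:R^-1 by rewrite -E mul1r.
have := mulIf Ninv0 E4; lra.
Qed.

Theorem mainTheorem2 (R : realType) (N : nat) (p : event N -> R) (u : R)
    (hp : is_replacement_rule p) (hfix : fixation_assumption p)
    (hB : 0 < total_birth p) (hu : 0 < u) :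
  ((forall i : 'I_N, rho_site p i = N%:R^-1) <->
   (forall i : 'I_N, birth_rate p i = death_rate p i)) /\
  ((forall i : 'I_N, birth_rate p i = death_rate p i) ->
   rho_overall p = N%:R^-1 /\ clock_rate p u = u).
Proof.
have [i0 _] := hfix.
have N0 : N%:R != 0 :> R by rewrite pnatr_eq0 -lt0n; apply: (leq_ltn_trans _ (ltn_ord i0)).
split; first by split; [exact: partB | exact: partA].
move=> hbd; have hr := partA hp hfix hbd.
have Hrho : rho_overall p = N%:R^-1.
  rewrite /rho_overall; under eq_bigr do rewrite hr.
  rewrite -mulr_suml.
  have -> : \sum_(i < N) death_rate p i = total_birth p.
    by rewrite /total_birth /death_rate exchange_big.
  by rewrite mulrA mulVf ?mul1r // gt_eqF.
split => //.
by rewrite /clock_rate Hrho mulrAC mulfV // mul1r.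
Qed.
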